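(* Let $T_i,T_j$ be indecomposable summands of a maximal rigid object $T$ of $\mathcal{C}_n$. Then either $T_i\in\mathcal{W}_{T_j}$, or $T_j\in\mathcal{W}_{T_i}$, or $\mathcal{W}_{T_i}\cap\mathcal{W}_{T_j}=\emptyset$.
   Context: Let $k$ be algebraically closed, $n\ge2$, $\mathcal{T}_n$ the tube of rank $n$ (finite-dimensional nilpotent representations of the cyclically oriented $\tilde A_{n-1}$-quiver; AR-translation $\tau$), $\mathcal{C}_n=D^b(\mathcal{T}_n)/\tau^{-1}[1]$ the cluster tube, with indecomposables identified with those of $\mathcal{T}_n$. Indecomposables have coordinates $(a,b)$, $a\in\mathbb{Z}/n$, $b\ge1$ the quasilength, with $\tau(a,b)=(a-1,b)$ and irreducible maps $(a,b)\to(a,b+1)$ and $(a,b)\to(a+1,b-1)$. For $X=(a,i)$, $i\le n-1$, the wing $\mathcal{W}_X$ is $\{(a+s,i'):s\ge0,i'\ge1,s+i'\le i\}$. $T$ is maximal rigid if $\operatorname{Ext}^1_{\mathcal{C}_n}(T,T)=0$ and $\operatorname{Ext}^1(T\oplus X,T\oplus X)=0$ implies $X\in\operatorname{add}T$; all indecomposable summands of a maximal rigid object have quasilength at most $n-1$. *)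

(* Defs.v *)
From HB Require Import structures.
From mathcomp Require Import all_boot all_order all_algebra.
Set Implicit Arguments. Unset Strict Implicit. Unset Printing Implicit Defensive.
Import GRing.Theory.
Local Open Scope ring_scope.

(* Indecomposable objects of the tube T_n (equivalently of the cluster tube
   C_n) are encoded by their coordinates (a, b) : 'I_n * nat with b >= 1.
   Concretely (a,b) is the uniserial nilpotent representation of the cyclic
   quiver with vertices Z/n and arrows v -> v-1 having basis e_0,...,e_{b-1},
   e_j sitting at vertex (a + j) mod n, the arrows acting by e_j |-> e_{j-1}
   (e_0 |-> 0).  Thus (a,1) is its quasi-socle, tau (a,b) = (a-1,b),
   (a,b) -> (a,b+1) is the irreducible mono and (a,b) -> (a+1,b-1) the
   irreducible epi. *)
Definition ind (n : nat) := ('I_n * nat)%type.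

Definition valid_ind {n} (X : ind n) : bool := (0 < X.2)%N.

Definition degI (n a j : nat) : nat := ((a + j) %% n)%N.

(* the arrow action e_j |-> e_{j-1}, as a matrix acting on column vectors *)
Definition shiftmx (k : fieldType) (b : nat) : 'M[k]_b :=
  \matrix_(i < b, j < b) (if (j == i.+1 :> nat) then 1 else 0).

(* Ext^1_{T_n}(X,Y) = 0, via the standard presentation of Ext^1 for quiver
   representations:  Ext^1(M,N) = coker( (+)_v Hom(M_v,N_v) -> (+)_{alpha : v -> v-1} Hom(M_v,N_{v-1}) ),
   (f_v) |-> (N_alpha f_v - f_{v-1} M_alpha).  Linear maps M -> N are b' x b
   matrices; the degree conditions say which blocks are allowed.  Vanishing
   means the map is surjective. *)
Definition ext1T_zero (k : fieldType) {n} (X Y : ind n) : Prop :=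
  let: (a, b) := X in let: (a', b') := Y in
  forall G : 'M[k]_(b', b),
    (forall (i : 'I_b') (j : 'I_b),
        ((degI n a' i).+1 %% n)%N != degI n a j -> G i j = 0) ->
    exists F : 'M[k]_(b', b),
      (forall (i : 'I_b') (j : 'I_b), degI n a' i != degI n a j -> F i j = 0)
      /\ G = shiftmx k b' *m F - F *m shiftmx k b.

(* In the cluster tube C_n = D^b(T_n)/tau^{-1}[1]:
   Ext^1_{C_n}(X,Y) = Ext^1_{T_n}(X,Y) (+) D Ext^1_{T_n}(Y,X). *)
Definition ext1C_zero (k : fieldType) {n} (X Y : ind n) : Prop :=
  ext1T_zero k X Y /\ ext1T_zero k Y X.

(* A (basic) object T is represented by the list of its indecomposable
   summands; Ext^1 is additive. *)
Definition rigid (k : fieldType) {n} (T : seq (ind n)) : Prop :=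
  forall X Y, X \in T -> Y \in T -> ext1C_zero k X Y.

Definition maximal_rigid (k : fieldType) {n} (T : seq (ind n)) : Prop :=
  [/\ forall X, X \in T -> valid_ind X,
      rigid k T &
      forall Z : ind n, valid_ind Z -> rigid k (Z :: T) -> Z \in T].

Definition in_wing {n} (X Y : ind n) : Prop :=
  let: (a, i) := X in let: (c, i') := Y in
  exists s : nat, [/\ (0 < i')%N, (s + i' <= i)%N & (c : nat) = ((a + s) %% n)%N].

(* Main.v *)
Require Import Defs.
From mathcomp Require Import all_boot all_order all_algebra.
From mathcomp Require Import zify.
From Stdlib Require Import Classical.
Section LinAlg.
Import GRing.Theory.
Local Open Scope ring_scope.
Lemma sum_ind (R : ringType) (m c : nat) (g : nat -> R) :
  \sum_(i < m) ((if (i : nat) == c then 1 else 0) * g i) = if (c < m)%N then g c else 0.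
Proof.
case: ltnP => hc.
  rewrite (bigD1 (Ordinal hc)) //= eqxx mul1r big1 ?addr0 // => i hi.
  have -> : ((i : nat) == c) = false.
    by apply/negP => /eqP e; move/negP: hi; apply; apply/eqP/val_inj.
  by rewrite mul0r.
rewrite big1 // => i _.
have -> : ((i : nat) == c) = false.
  by apply/negP => /eqP e; move: (ltn_ord i); rewrite e ltnNge hc.
by rewrite mul0r.
Qed.

Lemma obs_ext (k : fieldType) n (a : 'I_n) b (a' : 'I_n) b' d :
  (d < b')%N -> (b' <= b + d)%N -> ((a' + d).+1 %% n)%N = a ->
  ~ ext1T_zero k (a, b) (a', b').
Proof.
move=> hd hb hm H.
pose G : 'M[k]_(b', b) := \matrix_(i, j) ((if (i : nat) == d then 1 else 0) *
                                   (if (j : nat) == 0%N then 1 else 0)).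
have [F [_ HG]] : exists F : 'M[k]_(b', b),
   (forall (i : 'I_b') (j : 'I_b), degI n a' i != degI n a j -> F i j = 0)
      /\ G = shiftmx k b' *m F - F *m shiftmx k b.
  apply: H => i j hij; rewrite mxE.
  case: eqP => ei; last by rewrite mul0r.
  case: eqP => ej; last by rewrite mulr0.
  exfalso; move/negP: hij; apply; apply/eqP.
  rewrite /degI ei ej addn0 (modn_small (ltn_ord a)) -hm.
  by rewrite -addn1 modnDml addn1.
pose P : 'M[k]_(b, b') := \matrix_(j, i) (if (i : nat) == (j + d)%N then 1 else 0).
have PS : P *m shiftmx k b' = shiftmx k b *m P.
  apply/matrixP => j l; rewrite !mxE.
  under eq_bigr do rewrite !mxE.
  rewrite (@sum_ind _ _ _ (fun i => if (l : nat) == i.+1 then 1 else 0)).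
  under eq_bigr do rewrite !mxE.
  rewrite (@sum_ind _ _ _ (fun i => if (l : nat) == (i + d)%N then 1 else 0)).
  have hj := ltn_ord j; have hl := ltn_ord l.
  case: (ltnP (j + d) b') => h1; case: (ltnP j.+1 b) => h2.
  - by rewrite addSn.
  - have -> : ((l : nat) == (j + d).+1) = false by apply/negP => /eqP; lia.
    by [].
  - have -> : ((l : nat) == (j.+1 + d)%N) = false by apply/negP => /eqP; lia.
    by [].
  - by [].
have t1 : \tr (G *m P) = 1.
  rewrite /mxtrace.
  under eq_bigr do rewrite !mxE.
  under eq_bigr => i _ do (under eq_bigr do rewrite !mxE -mulrA; rewrite -mulr_sumr
     (@sum_ind _ _ _ (fun j => if (i : nat) == (j + d)%N then 1 else 0)) ?(leq_trans _ hd) //).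
  have b0 : (0 < b)%N by lia.
  rewrite b0 /=.
  by rewrite (@sum_ind _ _ _ (fun i => if (i : nat) == (0 + d)%N then 1 else 0)) hd add0n eqxx.
have t0 : \tr (G *m P) = 0.
  rewrite HG mulmxBl raddfB /= -mulmxA mxtrace_mulC -mulmxA PS !mulmxA.
  by rewrite subrr.
by move: t1; rewrite t0 => /esym/eqP; rewrite oner_eq0.
Qed.
End LinAlg.
Lemma orient n (a c : 'I_n) b e C :
  (C %% n = c)%N -> (a <= C)%N -> (C < a + b)%N -> (0 < b)%N -> (0 < e)%N ->
  in_wing (a, b) (c, e) \/ in_wing (c, e) (a, b) \/
  exists d, [/\ (d < b)%N, (b <= e + d)%N & ((a + d).+1 %% n)%N = c].
Proof.
move=> hC h1 h2 hb he.
case: (leqP (C + e) (a + b)) => h3.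
  left; exists (C - a)%N; split => //; first lia.
  by rewrite subnKC.
case: (posnP (C - a)) => h4.
  have eC : C = a by lia.
  have ec : (c : nat) = a by rewrite -hC eC modn_small.
  right; left; exists 0%N; split => //; first lia.
  by rewrite addn0 modn_small // ec.
right; right; exists (C - a).-1; split; try lia.
by rewrite -addnS prednK // subnKC.
Qed.

Lemma mod2 n x : (x < n + n)%N -> (x %% n = if (x < n)%N then x else x - n)%N.
Proof.
move=> h; case: ltnP => h1; first by rewrite modn_small.
by rewrite -{1}(subnK h1) modnDr modn_small //; lia.
Qed.

Lemma self_small (k : fieldType) n (a : 'I_n) b :
  ext1T_zero k (a, b) (a, b) -> (b < n)%N.
Proof.
move=> H; case: (ltnP b n) => // hb; exfalso.
have n0 : (0 < n)%N by have := ltn_ord a; lia.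
apply: (@obs_ext k n a b a b n.-1) => //; first lia; first lia.
by rewrite -addnS prednK // modnDr modn_small.
Qed.
Lemma lift n (a c : 'I_n) b e s s' :
  (b < n)%N -> (e < n)%N -> (s < b)%N -> (s' < e)%N ->
  ((a + s) %% n = (c + s') %% n)%N ->
  (exists C, [/\ (C %% n = c)%N, (a <= C)%N & (C < a + b)%N]) \/
  (exists A, [/\ (A %% n = a)%N, (c <= A)%N & (A < c + e)%N]).
Proof.
have ha := ltn_ord a; have hc := ltn_ord c.
move=> hb he hs hs'.
have h1 : (a + s < n + n)%N by lia.
have h2 : (c + s' < n + n)%N by lia.
rewrite (@mod2 n _ h1) (@mod2 n _ h2).
case: ltnP => h3; case: ltnP => h4 => e0.
- case: (leqP a c) => h5.
  + by left; exists (c : nat); split; [rewrite modn_small|lia|lia].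
  + by right; exists (a : nat); split; [rewrite modn_small|lia|lia].
- by right; exists (a + n)%N; split; [rewrite modnDr modn_small|lia|lia].
- by left; exists (c + n)%N; split; [rewrite modnDr modn_small|lia|lia].
- case: (leqP a c) => h5.
  + by left; exists (c : nat); split; [rewrite modn_small|lia|lia].
  + by right; exists (a : nat); split; [rewrite modn_small|lia|lia].
Qed.

Theorem lemma2p6 (k : closedFieldType) (n : nat) (T : seq (ind n))
    (Ti Tj : ind n) :
  (2 <= n)%N -> maximal_rigid k T -> Ti \in T -> Tj \in T ->
  in_wing Tj Ti \/ in_wing Ti Tj \/ ~ (exists Z : ind n, in_wing Ti Z /\ in_wing Tj Z).
Proof.
move=> hn [hv hr _] hi hj.
have vi := hv _ hi; have vj := hv _ hj.
have [eij eji] := hr _ _ hi hj.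
have [eii _] := hr _ _ hi hi.
have [ejj _] := hr _ _ hj hj.
move: Ti Tj hi hj vi vj eij eji eii ejj => [a b] [c e] hi hj vb ve eij eji eii ejj.
rewrite /valid_ind /= in vb ve.
have bn := @self_small _ _ _ _ eii; have en := @self_small _ _ _ _ ejj.
destruct (classic (exists Z : ind n, in_wing (a, b) Z /\ in_wing (c, e) Z))
  as [[[z l] [[s [l0 hs hz]] [s' [_ hs' hz']]]] | hN]; last by right; right.
have hs1 : (s < b)%N by lia.
have hs2 : (s' < e)%N by lia.
have eq : ((a + s) %% n = (c + s') %% n)%N by rewrite -hz -hz'.
case: (@lift n a c b e s s' bn en hs1 hs2 eq).
- case=> C [hC h1 h3].
  have [w|[w|[d [d1 d2 d3]]]] := @orient n a c b e C hC h1 h3 vb ve.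
  + by right; left.
  + by left.
  + by exfalso; apply: (@obs_ext k n c e a b d d1 d2 d3).
- case=> A [hA h1 h3].
  have [w|[w|[d [d1 d2 d3]]]] := @orient n c a e b A hA h1 h3 ve vb.
  + by left.
  + by right; left.
  + by exfalso; apply: (@obs_ext k n a b c e d d1 d2 d3).
Qed.
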